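(* For all integers $m,n\geq 1$, \[p^{od}_{ed}(m,n)-p^{od}_{ed}(m,n-1)=D_o(m,n)-D_e(m,n-1).\]
   Context: $\mathcal{P}^{od}_{ed}$ is the set of integer partitions whose parts are all distinct and such that every even part is smaller than every odd part. Partitions consisting only of odd parts, or only of even parts, are allowed. For integers $m\ge 1$, $n\ge 0$: - $p^{od}_{ed}(m,n)$ is the number of partitions of $n$ in $\mathcal{P}^{od}_{ed}$ with exactly $m$ parts; in particular $p^{od}_{ed}(m,0)=0$. - $D_o(m,n)$ is the number of partitions of $n$ into exactly $m$ distinct odd parts. - $D_e(m,n)$ is the number of partitions of $n$ into exactly $m$ distinct even parts. *)

(* Defs.v *)
From mathcomp Require Import all_boot all_order all_algebra.
Set Implicit Arguments. Unset Strict Implicit. Unset Printing Implicit Defensive.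

(* A partition of n into distinct parts is represented by its (finite) set of
   parts: a set S of positive integers (all parts are <= n, so S : {set 'I_n.+1})
   whose elements sum to n. *)
Definition distinct_partitions (n : nat) : {set {set 'I_n.+1}} :=
  [set S : {set 'I_n.+1} | (ord0 \notin S) && (\sum_(i in S) (i : nat) == n)].

Definition pod_ed (m n : nat) : nat :=
  #|[set S in distinct_partitions n |
      (#|S| == m) &&
      [forall i in S, forall j in S, (~~ odd i && odd j) ==> (i < j)]]|.

Definition D_o (m n : nat) : nat :=
  #|[set S in distinct_partitions n | (#|S| == m) && [forall i in S, odd i]]|.

Definition D_e (m n : nat) : nat :=
  #|[set S in distinct_partitions n | (#|S| == m) && [forall i in S, ~~ odd i]]|.

(* Main.v *)
Require Import Defs.
From mathcomp Require Import all_boot all_order all_algebra zify.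


Lemma transport a b (S : {set 'I_a}) (h : nat -> nat) :
  (forall i j : 'I_a, i \in S -> j \in S -> h i = h j -> i = j) ->
  (forall i : 'I_a, i \in S -> h i <= b) ->
  (forall j : 'I_b.+1, j \in [set (inord (h i) : 'I_b.+1) | i : 'I_a in S] <->
      exists2 i : 'I_a, i \in S & (j : nat) = h i) /\
  #|[set (inord (h i) : 'I_b.+1) | i : 'I_a in S]| = #|S| /\
  \sum_(j in [set (inord (h i) : 'I_b.+1) | i : 'I_a in S]) (j : nat) = \sum_(i in S) h i.
Proof.
move=> hinj hb.
have inj : {in S &, injective (fun i : 'I_a => (inord (h i) : 'I_b.+1))}.
  move=> i j iS jS /(congr1 val); rewrite /= !inordK ?ltnS ?hb //; exact: hinj.
split; last split.
- move=> j; split.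
    by case/imsetP=> i iS ->; exists i => //; rewrite inordK // ltnS hb.
  by case=> i iS hj; apply/imsetP; exists i => //; apply: val_inj; rewrite /= inordK // ltnS hb.
- exact: card_in_imset.
- rewrite big_imset //; apply: eq_bigr => i iS; rewrite inordK // ltnS hb //.
Qed.

Set Implicit Arguments. Unset Strict Implicit.

Definition podc a (S : {set 'I_a}) : bool :=
  [forall i in S, forall j in S, (~~ odd i && odd j) ==> (i < j)].
Definition spf a (S : {set 'I_a}) (i : nat) : bool :=
  ~~ odd i && [forall j : 'I_a in S, ~~ odd j ==> (j <= i)].
Definition hf a (S : {set 'I_a}) (i : nat) : nat := if spf S i then i.-1 else i.
Definition spg a (S : {set 'I_a}) (i : nat) : bool :=
  odd i && [forall j : 'I_a in S, odd j ==> (i <= j)].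
Definition hg a (S : {set 'I_a}) (i : nat) : nat := if spg S i then i.+1 else i.
Definition fmap k (S : {set 'I_k.+2}) : {set 'I_k.+1} :=
  [set (inord (hf S i) : 'I_k.+1) | i : 'I_k.+2 in S].
Definition gmap k (S : {set 'I_k.+1}) : {set 'I_k.+2} :=
  [set (inord (hg S i) : 'I_k.+2) | i : 'I_k.+1 in S].

Lemma podP a (S : {set 'I_a}) i j : podc S -> i \in S -> j \in S ->
  ~~ odd i -> odd j -> (i < j)%N.
Proof.
move=> /forall_inP H iS jS io jo.
by move: (H i iS) => /forall_inP /(_ j jS) /implyP; apply; rewrite io jo.
Qed.

Lemma posP a (S : {set 'I_a.+1}) i : ord0 \notin S -> i \in S -> (0 < i)%N.
Proof.
move=> H iS; rewrite lt0n; apply: contraNneq H => i0.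
by have -> : (ord0 : 'I_a.+1) = i by apply: val_inj; rewrite /= i0.
Qed.

Lemma oddP1 n : (0 < n)%N -> odd n.-1 = ~~ odd n.
Proof. by case: n => //= n _; rewrite negbK. Qed.

Lemma f_props k (S : {set 'I_k.+2}) : ord0 \notin S ->
  \sum_(i in S) (i : nat) = k.+1 -> podc S -> [exists i in S, ~~ odd i] ->
  (forall j : 'I_k.+1, j \in fmap S <-> exists2 i : 'I_k.+2, i \in S & (j : nat) = hf S i) /\
  ord0 \notin fmap S /\ \sum_(j in fmap S) (j : nat) = k /\ #|fmap S| = #|S| /\
  podc (fmap S) /\ [exists j in fmap S, odd j] /\
  (forall i : 'I_k.+2, i \in S -> hg (fmap S) (hf S i) = i) /\
  (forall i : 'I_k.+2, i \in S -> (hf S i <= k)%N).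
Proof.
move=> H0 Hsum Hpod Hex.
have [e eS spe] : exists2 e : 'I_k.+2, e \in S & spf S e.
  case/exists_inP: Hex => i0 i0S i0e.
  case: (@arg_maxnP _ i0 [pred i | (i \in S) && ~~ odd i] (fun i => val i)).
    by rewrite /= i0S.
  move=> e /andP[eS ee] emax; exists e => //.
  rewrite /spf ee; apply/forall_inP => j jS; apply/implyP => je.
  by apply: (emax j); rewrite /= jS.
have ee : ~~ odd e by case/andP: spe.
have emax : forall j : 'I_k.+2, j \in S -> ~~ odd j -> (j <= e)%N.
  by move=> j jS jo; case/andP: spe => _ /forall_inP /(_ j jS) /implyP; apply.
have spu : forall i : 'I_k.+2, i \in S -> spf S i -> i = e.
  move=> i iS /andP[io /forall_inP /(_ e eS) /implyP /(_ ee) ei].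
  apply: val_inj => /=; have := emax i iS io; move: ei; clear; rewrite /=; clear; lia.
have e0 : (0 < e)%N := posP H0 eS.
have oe1 : odd e.-1 by rewrite oddP1 ?ee.
have hfe : hf S e = e.-1 by rewrite /hf spe.
have hfi : forall i : 'I_k.+2, i \in S -> i != e -> hf S i = i.
  move=> i iS ie; rewrite /hf; case: ifP => // /(spu i iS) ie'.
  by rewrite ie' eqxx in ie.
have hfinj : forall i j : 'I_k.+2, i \in S -> j \in S -> hf S i = hf S j -> i = j.
  have aux : forall j : 'I_k.+2, j \in S -> j != e -> e.-1 <> j.
    move=> j jS je ej.
    have jo : odd j by rewrite -ej.
    have := podP Hpod eS jS ee jo; move: ej e0; clear; lia.
  move=> i j iS jS; case: (eqVneq i e) => [->|ie]; case: (eqVneq j e) => [->|je] //.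
  - rewrite hfe hfi // => /aux; by move=> /(_ jS je).
  - rewrite hfe hfi // => h; exfalso; exact: (aux i iS ie (esym h)).
  - by rewrite !hfi // => /val_inj.
have hsum : \sum_(i in S) hf S i = k.
  have Hs := Hsum; rewrite (bigD1 e) //= in Hs; rewrite (bigD1 e) //= hfe.
  rewrite (eq_bigr (fun i : 'I_k.+2 => (i : nat))); first by move: Hs e0; clear; lia.
  by move=> i /andP[iS ie]; rewrite hfi.
have hb : forall i : 'I_k.+2, i \in S -> (hf S i <= k)%N.
  by move=> i iS; move: hsum; rewrite (bigD1 i) //=; clear; lia.
have [memT [cardT sumT]] := @transport _ k _ _ hfinj hb.
rewrite -/(fmap S) in memT cardT sumT.
have eT : (inord e.-1 : 'I_k.+1) \in fmap S.
  by apply/memT; exists e => //; rewrite hfe inordK //; have := ltn_ord e; clear; lia.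
have ve : ((inord e.-1 : 'I_k.+1) : nat) = e.-1 by rewrite inordK //; have := ltn_ord e; clear; lia.
split => //; split.
  apply/negP => /memT [i iS] /=; case: (eqVneq i e) => [->|ie].
    by rewrite hfe; move: oe1; case: (e : nat) => [|[]].
  by rewrite hfi //; have := posP H0 iS; clear; lia.
split; first by rewrite sumT.
split => //; split.
  apply/forall_inP => x /memT [i iS ->]; apply/forall_inP => y /memT [j jS ->].
  apply/implyP => /andP[xe yo].
  have ie : i != e by apply: contraNneq xe => ->; rewrite hfe oe1.
  rewrite hfi // in xe *.
  case: (eqVneq j e) => [je|je].
    rewrite je hfe.
    have ile := emax i iS xe.
    have : i.+1 != e by apply: contraTneq ee => <-; rewrite /= negbK.
    have : (i : nat) != e by rewrite (inj_eq val_inj).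
    move: ile; clear; lia.
  rewrite hfi // in yo *; exact: podP Hpod iS jS xe yo.
split.
  by apply/exists_inP; exists (inord e.-1) => //; rewrite ve.
split; last exact: hb.
move=> i iS.
case: (eqVneq i e) => [->|ie].
  rewrite hfe /hg; have -> : spg (fmap S) e.-1.
    rewrite /spg oe1; apply/forall_inP => y /memT [j jS ->]; apply/implyP.
    case: (eqVneq j e) => [->|je]; first by rewrite hfe.
    rewrite hfi // => jo; have := podP Hpod eS jS ee jo; clear; lia.
  by rewrite prednK.
rewrite hfi // /hg; case: ifP => //; case/andP => io /forall_inP /(_ _ eT).
rewrite ve oe1 /=; have := podP Hpod eS iS ee io; clear; lia.
Qed.

Lemma g_props k (S : {set 'I_k.+1}) : ord0 \notin S ->
  \sum_(i in S) (i : nat) = k -> podc S -> [exists i in S, odd i] ->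
  (forall j : 'I_k.+2, j \in gmap S <-> exists2 i : 'I_k.+1, i \in S & (j : nat) = hg S i) /\
  ord0 \notin gmap S /\ \sum_(j in gmap S) (j : nat) = k.+1 /\ #|gmap S| = #|S| /\
  podc (gmap S) /\ [exists j in gmap S, ~~ odd j] /\
  (forall i : 'I_k.+1, i \in S -> hf (gmap S) (hg S i) = i) /\
  (forall i : 'I_k.+1, i \in S -> (hg S i <= k.+1)%N).
Proof.
move=> H0 Hsum Hpod Hex.
have [e eS spe] : exists2 e : 'I_k.+1, e \in S & spg S e.
  case/exists_inP: Hex => i0 i0S i0e.
  case: (@arg_minnP _ i0 [pred i | (i \in S) && odd i] (fun i => val i)).
    by rewrite /= i0S.
  move=> e /andP[eS ee] emin; exists e => //.
  rewrite /spg ee; apply/forall_inP => j jS; apply/implyP => je.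
  by apply: (emin j); rewrite /= jS.
have ee : odd e by case/andP: spe.
have emin : forall j : 'I_k.+1, j \in S -> odd j -> (e <= j)%N.
  by move=> j jS jo; case/andP: spe => _ /forall_inP /(_ j jS) /implyP; apply.
have spu : forall i : 'I_k.+1, i \in S -> spg S i -> i = e.
  move=> i iS /andP[io /forall_inP /(_ e eS) /implyP /(_ ee) ei].
  apply: val_inj => /=; have := emin i iS io; move: ei; clear; rewrite /=; clear; lia.
have e0 : (0 < e)%N := posP H0 eS.
have oe1 : ~~ odd e.+1 by rewrite /= negbK.
have hge : hg S e = e.+1 by rewrite /hg spe.
have hgi : forall i : 'I_k.+1, i \in S -> i != e -> hg S i = i.
  move=> i iS ie; rewrite /hg; case: ifP => // /(spu i iS) ie'.
  by rewrite ie' eqxx in ie.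
have hginj : forall i j : 'I_k.+1, i \in S -> j \in S -> hg S i = hg S j -> i = j.
  have aux : forall j : 'I_k.+1, j \in S -> j != e -> e.+1 <> j.
    move=> j jS je ej.
    have jo : ~~ odd j by rewrite -ej.
    have := podP Hpod jS eS jo ee; move: ej; clear; lia.
  move=> i j iS jS; case: (eqVneq i e) => [->|ie]; case: (eqVneq j e) => [->|je] //.
  - rewrite hge hgi // => /aux; by move=> /(_ jS je).
  - rewrite hge hgi // => h; exfalso; exact: (aux i iS ie (esym h)).
  - by rewrite !hgi // => /val_inj.
have hsum : \sum_(i in S) hg S i = k.+1.
  have Hs := Hsum; rewrite (bigD1 e) //= in Hs; rewrite (bigD1 e) //= hge.
  rewrite (eq_bigr (fun i : 'I_k.+1 => (i : nat))); first by move: Hs; clear; lia.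
  by move=> i /andP[iS ie]; rewrite hgi.
have hb : forall i : 'I_k.+1, i \in S -> (hg S i <= k.+1)%N.
  by move=> i iS; move: hsum; rewrite (bigD1 i) //=; clear; lia.
have [memT [cardT sumT]] := @transport _ k.+1 _ _ hginj hb.
rewrite -/(gmap S) in memT cardT sumT.
have eT : (inord e.+1 : 'I_k.+2) \in gmap S.
  by apply/memT; exists e => //; rewrite hge inordK //; have := ltn_ord e; clear; lia.
have ve : ((inord e.+1 : 'I_k.+2) : nat) = e.+1 by rewrite inordK //; have := ltn_ord e; clear; lia.
split => //; split.
  apply/negP => /memT [i iS] /=; case: (eqVneq i e) => [->|ie].
    by rewrite hge.
  by rewrite hgi //; have := posP H0 iS; clear; lia.
split; first by rewrite sumT.
split => //; split.
  apply/forall_inP => x /memT [i iS ->]; apply/forall_inP => y /memT [j jS ->].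
  apply/implyP => /andP[xe yo].
  have je : j != e by apply: contraTneq yo => ->; rewrite hge.
  rewrite hgi // in yo *.
  have ej := emin j jS yo.
  have : (j : nat) != e by rewrite (inj_eq val_inj).
  have : e.+1 != j by apply: contraNneq oe1 => ->.
  case: (eqVneq i e) => [ie|ie].
    rewrite ie hge => H1 H2; move: ej H1 H2; clear; lia.
  rewrite hgi // in xe * => _ _; exact: podP Hpod iS jS xe yo.
split.
  by apply/exists_inP; exists (inord e.+1) => //; rewrite ve.
split; last exact: hb.
move=> i iS.
case: (eqVneq i e) => [->|ie].
  rewrite hge /hf; have -> : spf (gmap S) e.+1.
    rewrite /spf oe1; apply/forall_inP => y /memT [j jS ->]; apply/implyP.
    case: (eqVneq j e) => [->|je]; first by rewrite hge.
    rewrite hgi // => jo; have := podP Hpod jS eS jo ee; clear; lia.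
  by [].
rewrite hgi // /hf; case: ifP => //; case/andP => io /forall_inP /(_ _ eT).
rewrite ve oe1 /=; have := podP Hpod iS eS io ee; clear; lia.
Qed.

Lemma split1 m n : pod_ed m n =
  #|[set S in distinct_partitions n | (#|S| == m) && podc S && [exists i in S, ~~ odd i]]| + D_o m n.
Proof.
rewrite /pod_ed /D_o -(cardsID [set S : {set 'I_n.+1} | [exists i in S, ~~ odd i]]).
congr (_ + _); apply: eq_card => S; rewrite !inE.
  by rewrite /podc !andbA.
rewrite negb_exists_in.
have -> : [forall x in S, ~~ ~~ odd x] = [forall i in S, odd i].
  by apply: eq_forallb => i; rewrite negbK.
case F : [forall i in S, odd i]; last by rewrite /= !andbF.
have -> : [forall i in S, forall j in S, (~~ odd i && odd j) ==> (i < j)].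
  apply/forall_inP => i iS; apply/forall_inP => j jS.
  by rewrite (forall_inP F i iS).
by rewrite /= !andbT.
Qed.

Lemma split2 m n : pod_ed m n =
  #|[set S in distinct_partitions n | (#|S| == m) && podc S && [exists i in S, odd i]]| + D_e m n.
Proof.
rewrite /pod_ed /D_e -(cardsID [set S : {set 'I_n.+1} | [exists i in S, odd i]]).
congr (_ + _); apply: eq_card => S; rewrite !inE.
  by rewrite /podc !andbA.
rewrite negb_exists_in.
case F : [forall i in S, ~~ odd i]; last by rewrite /= !andbF.
have -> : [forall i in S, forall j in S, (~~ odd i && odd j) ==> (i < j)].
  apply/forall_inP => i iS; apply/forall_inP => j jS.
  by rewrite (negbTE (forall_inP F j jS)) andbF.
by rewrite /= !andbT.
Qed.

Lemma XY m k :
  #|[set S in distinct_partitions k.+1 | (#|S| == m) && podc S && [exists i in S, ~~ odd i]]| =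
  #|[set S in distinct_partitions k | (#|S| == m) && podc S && [exists i in S, odd i]]|.
Proof.
set X := [set S in _ | _]; set Y := [set S in _ | _].
have hX : forall S, S \in X -> [/\ ord0 \notin S, \sum_(i in S) (i : nat) = k.+1, #|S| = m,
   podc S & [exists i in S, ~~ odd i]].
  move=> S; rewrite !inE => /and3P[/andP[o s] /andP[/eqP c p] e]; split => //; exact/eqP.
have hY : forall S, S \in Y -> [/\ ord0 \notin S, \sum_(i in S) (i : nat) = k, #|S| = m,
   podc S & [exists i in S, odd i]].
  move=> S; rewrite !inE => /and3P[/andP[o s] /andP[/eqP c p] e]; split => //; exact/eqP.
have fX : forall S, S \in X -> fmap S \in Y /\ gmap (fmap S) = S.
  move=> S /hX [o s c p e].
  have [mem [o' [s' [c' [p' [e' [comp hb]]]]]]] := f_props o s p e.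
  split; first by rewrite /Y !inE o' s' c' c p' e' !eqxx.
  have [mem2 _] := g_props o' s' p' e'.
  apply/setP => x; apply/idP/idP.
    case/mem2 => y /mem [i iS yi] xe; suff -> : x = i by [].
    by apply: val_inj; rewrite /= xe yi comp.
  move=> xS; apply/mem2; exists (inord (hf S x)).
    by apply/mem; exists x => //; rewrite inordK // ltnS hb.
  by rewrite inordK ?ltnS ?hb // comp.
have gY : forall S, S \in Y -> gmap S \in X /\ fmap (gmap S) = S.
  move=> S /hY [o s c p e].
  have [mem [o' [s' [c' [p' [e' [comp hb]]]]]]] := g_props o s p e.
  split; first by rewrite /X !inE o' s' c' c p' e' !eqxx.
  have [mem2 _] := f_props o' s' p' e'.
  apply/setP => x; apply/idP/idP.
    case/mem2 => y /mem [i iS yi] xe; suff -> : x = i by [].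
    by apply: val_inj; rewrite /= xe yi comp.
  move=> xS; apply/mem2; exists (inord (hg S x)).
    by apply/mem; exists x => //; rewrite inordK // ltnS hb.
  by rewrite inordK ?ltnS ?hb // comp.
apply/eqP; rewrite eqn_leq; apply/andP; split.
  have injX : {in X &, injective (@fmap k)}.
    by move=> S1 S2 h1 h2 E; rewrite -(fX S1 h1).2 -(fX S2 h2).2 E.
  rewrite -(card_in_imset injX); apply: subset_leq_card.
  by apply/subsetP => _ /imsetP[S SX ->]; exact: (fX S SX).1.
have injY : {in Y &, injective (@gmap k)}.
  by move=> S1 S2 h1 h2 E; rewrite -(gY S1 h1).2 -(gY S2 h2).2 E.
rewrite -(card_in_imset injY); apply: subset_leq_card.
by apply/subsetP => _ /imsetP[S SX ->]; exact: (gY S SX).1.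
Qed.

Unset Implicit Arguments.
Import GRing.Theory.
Local Open Scope ring_scope.

Theorem mainTheorem1 (m n : nat) (hm : (1 <= m)%N) (hn : (1 <= n)%N) :
  (pod_ed m n)%:Z - (pod_ed m n.-1)%:Z = (D_o m n)%:Z - (D_e m n.-1)%:Z.
Proof.
case: n hn => [//|k] _ /=.
rewrite (split1 m k.+1) (split2 m k) XY.
rewrite !PoszD; lia.
Qed.
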